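(* For $\mu_\ast\in\mathbb{R}$ and $b_\ast\in\mathbb{R}$ consider the equation $1-\mu_\ast ze^{b_\ast(1-z)}=0$ in $z\in\mathbb{C}$, and define $$I(\mu_\ast):=\{b_\ast\in\mathbb{R}\mid\text{all solutions }z\text{ of }1-\mu_\ast ze^{b_\ast(1-z)}=0\text{ lie strictly outside the unit circle}\}.$$ Then: (1) if $-e^2<\mu_\ast<-1$, the set $I(\mu_\ast)$ is a non-empty open interval with $I(\mu_\ast)\subseteq(-\infty,0)$; (2) if $-e^2<\mu_{\ast,1}<\mu_{\ast,2}<-1$, then $I(\mu_{\ast,1})\subseteq I(\mu_{\ast,2})$. *)

(* Defs.v *)
From Stdlib Require Import Reals.
From Coquelicot Require Import Coquelicot.
Open Scope R_scope.

Definition Cexp (z : C) : C :=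
  (exp (Re z) * cos (Im z), exp (Re z) * sin (Im z)).

Definition charfun (mu b : R) (z : C) : C :=
  Cminus 1 (Cmult (Cmult (RtoC mu) z) (Cexp (Cmult (RtoC b) (Cminus 1 z)))).

Definition Iset (mu : R) (b : R) : Prop :=
  forall z : C, charfun mu b z = 0 -> Cmod z > 1.

Definition nonempty_open_interval (S : R -> Prop) : Prop :=
  exists a c : Rbar, Rbar_lt a c /\
    forall x : R, S x <-> (Rbar_lt a x /\ Rbar_lt x c).

(* Main.v *)
Require Import Defs.
From Stdlib Require Import Reals Lra Lia ZArith Ranalysis5.
From Coquelicot Require Import Coquelicot.
Open Scope R_scope.

Lemma charfun_comp mu b x y :
  charfun mu b (x, y) =
  (1 - mu * exp (b*(1-x)) * (x * cos (b*y) + y * sin (b*y)),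
   - (mu * exp (b*(1-x)) * (y * cos (b*y) - x * sin (b*y)))).
Proof.
  unfold charfun, Cexp, Cminus, Cmult, Cplus, Copp, RtoC; simpl.
  replace (b * (1 + - x) - 0 * (0 + - y)) with (b*(1-x)) by ring.
  replace (b * (0 + - y) + 0 * (1 + - x)) with (-(b*y)) by ring.
  rewrite cos_neg, sin_neg.
  f_equal; ring.
Qed.

Lemma root_polar mu b x y : mu < 0 -> charfun mu b (x, y) = 0 ->
  exists r, 0 < r /\ x = - r * cos (b*y) /\ y = - r * sin (b*y) /\
            - mu * r * exp (b*(1-x)) = 1.
Proof.
  intros Hmu H. rewrite charfun_comp in H.
  assert (H1 := f_equal fst H). assert (H2 := f_equal snd H). simpl in H1, H2.
  set (E := exp (b*(1-x))) in *. set (c := cos (b*y)) in *. set (s := sin (b*y)) in *.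
  assert (HE : 0 < E) by apply exp_pos.
  assert (Hcs : c*c + s*s = 1) by (unfold c, s; rewrite <- (sin2_cos2 (b*y)); unfold Rsqr; ring).
  set (K := x*c + y*s).
  assert (HK : mu * E * K = 1) by (unfold K; lra).
  assert (Hyc : y*c - x*s = 0).
  { assert (mu * E <> 0) by (apply Rmult_integral_contrapositive; split; lra).
    apply (Rmult_eq_reg_l (mu*E)); [lra|]. lra. }
  exists (-K). repeat split.
  - assert (mu * E < 0) by (apply Rmult_neg_pos; lra). nra.
  - assert (e : c*K - s*(y*c - x*s) = x*(c*c+s*s)) by (unfold K; ring).
    rewrite Hcs, Hyc in e. lra.
  - assert (e : s*K + c*(y*c - x*s) = y*(c*c+s*s)) by (unfold K; ring).
    rewrite Hcs, Hyc in e. lra.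
  - lra.
Qed.

Lemma root_intro mu b x y r : 0 < r -> x = - r * cos (b*y) -> y = - r * sin (b*y) ->
  - mu * r * exp (b*(1-x)) = 1 -> charfun mu b (x, y) = 0.
Proof.
  intros Hr Hx Hy H. rewrite charfun_comp.
  set (E := exp (b*(1-x))) in *.
  assert (Hcs : cos (b*y) * cos (b*y) + sin (b*y) * sin (b*y) = 1)
    by (rewrite <- (sin2_cos2 (b*y)); unfold Rsqr; ring).
  set (c := cos (b*y)) in *. set (s := sin (b*y)) in *.
  unfold RtoC. f_equal.
  - replace (x * c + y * s) with (-r).
    + lra.
    + rewrite Hx, Hy. nra.
  - replace (y * c - x * s) with 0.
    + ring.
    + rewrite Hx, Hy. ring.
Qed.

Lemma Cmod_polar x y r c s : 0 < r -> x = - r * c -> y = - r * s -> c*c + s*s = 1 ->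
  Cmod (x, y) = r.
Proof.
  intros Hr Hx Hy Hcs. unfold Cmod; simpl.
  replace (x * (x * 1) + y * (y * 1)) with (r * r) by (subst; nra).
  apply sqrt_square; lra.
Qed.
Lemma sin_pos_0PI x : 0 < x < PI -> 0 < sin x.
Proof. intros; apply sin_gt_0; lra. Qed.

Lemma g_pos x : 0 < x < PI -> 0 < sin x - x * cos x.
Proof.
  intros Hx.
  destruct (MVT_cor2 (fun u => sin u - u * cos u) (fun u => u * sin u) 0 x) as [c [Hc1 Hc2]].
  - lra.
  - intros c _. apply is_derive_Reals. auto_derive; auto. ring.
  - rewrite sin_0, cos_0 in Hc1.
    assert (0 < sin c) by (apply sin_pos_0PI; lra).
    assert (0 < c * sin c * (x - 0)) by (apply Rmult_lt_0_compat; [apply Rmult_lt_0_compat|]; lra).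
    lra.
Qed.

Lemma M1 x y : 0 < x -> x <= y -> y < PI -> x / sin x <= y / sin y.
Proof.
  intros Hx Hxy Hy. destruct (Req_dec x y) as [->|Hne]; [lra|].
  left. apply (incr_function (fun u => u / sin u) 0 PI (fun u => (sin u - u * cos u) / (sin u)^2)).
  - intros u H1 H2; simpl in H1, H2.
    assert (0 < sin u) by (apply sin_pos_0PI; lra).
    auto_derive; [lra|]. field. lra.
  - intros u H1 H2; simpl in H1, H2.
    assert (0 < sin u) by (apply sin_pos_0PI; lra).
    assert (0 < sin u - u * cos u) by (apply g_pos; lra).
    apply Rdiv_lt_0_compat; [lra| apply pow_lt; lra].
  - simpl; lra.
  - lra.
  - simpl; lra.
Qed.

Definition f2 x := x * (1 + cos x) / sin x.

Lemma M2 x y : 0 < x -> x < y -> y < PI -> f2 y < f2 x.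
Proof.
  intros Hx Hxy Hy.
  cut (- f2 x < - f2 y); [lra|].
  apply (incr_function (fun u => - f2 u) 0 PI (fun u => (1 + cos u) * (u - sin u) / (sin u)^2)).
  - intros u H1 H2; simpl in H1, H2. unfold f2.
    assert (0 < sin u) by (apply sin_pos_0PI; lra).
    auto_derive; [lra|].
    assert (Hs := sin2_cos2 u); unfold Rsqr in Hs.
    replace (cos u * cos u) with (1 - sin u * sin u) by lra.
    field_simplify; [|lra|lra]. f_equal. nra.
  - intros u H1 H2; simpl in H1, H2.
    assert (0 < sin u) by (apply sin_pos_0PI; lra).
    assert (sin u < u) by (apply sin_lt_x; lra).
    assert (-1 < cos u).
    { destruct (COS_bound u). destruct (Req_dec (cos u) (-1)) as [e|]; [|lra].
      assert (Hs := sin2_cos2 u); unfold Rsqr in Hs. rewrite e in Hs. nra. }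
    apply Rdiv_lt_0_compat; [apply Rmult_lt_0_compat; lra| apply pow_lt; lra].
  - simpl; lra.
  - lra.
  - simpl; lra.
Qed.
Lemma cos_lb2 x : 0 < x < 1 -> 1 - x^2/2 <= cos x.
Proof.
  intros Hx. replace (cos x) with (cos (2 * (x/2))) by (f_equal; field). rewrite cos_2a_sin.
  assert (sin (x/2) < x/2) by (apply sin_lt_x; lra).
  assert (0 < sin (x/2)) by (apply sin_gt_0; assert (H3 := PI2_3_2); lra).
  nra.
Qed.
Lemma sin_lb3 x : 0 <= x <= 1 -> x - x^3/6 <= sin x.
Proof.
  intros Hx. destruct (pre_sin_bound x 0) as [H _]; try lra.
  unfold sin_approx in H. simpl in H. unfold sin_term in H. simpl in H.
  lra.
Qed.

Lemma PI_gt3 : 3 < PI.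
Proof. assert (H := PI2_3_2). lra. Qed.

Lemma cont_pt f x : ex_derive f x -> continuity_pt f x.
Proof. intros H. apply continuity_pt_filterlim. apply (ex_derive_continuous f x H). Qed.

Lemma tau_exists L : 0 < L < 2 -> exists tau, 0 < tau < PI /\ tau * (1 + cos tau) = L * sin tau.
Proof.
  intros HL. set (d := 2 - L). set (e := d/4).
  assert (He : 0 < e < 1/2) by (unfold e, d; lra).
  assert (HP := PI_gt3).
  destruct (IVT_interv (fun a => L * sin a - 2 * a * cos a) e (PI/2)) as [a [Ha Hk]].
  - intros a Ha. apply cont_pt. auto_derive. auto.
  - lra.
  - assert (sin e < e) by (apply sin_lt_x; lra).
    assert (1 - e^2/2 <= cos e) by (apply cos_lb2; lra).
    assert (e * e < d) by (unfold e, d in *; nra).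
    assert (L * sin e <= L * e) by (apply Rmult_le_compat_l; lra).
    assert (2 * e * (1 - e^2/2) <= 2 * e * cos e) by (apply Rmult_le_compat_l; lra).
    assert (e * (e * e - d) < 0) by (assert (e*e-d<0) by lra; nra).
    unfold d in *. nra.
  - rewrite sin_PI2, cos_PI2. lra.
  - assert (a <> PI/2).
    { intros ->. rewrite sin_PI2, cos_PI2 in Hk. lra. }
    exists (2*a). split; [lra|].
    rewrite sin_2a, cos_2a_cos. simpl in Hk.
    assert (Hk' : L * sin a = 2*a*cos a) by lra.
    replace (L * (2 * sin a * cos a)) with (2 * cos a * (L * sin a)) by ring.
    rewrite Hk'. ring.
Qed.

Lemma ln_le_m1 u : 0 < u -> ln u <= u - 1.
Proof. intros Hu. assert (H := exp_ineq1_le (ln u)). rewrite exp_ln in H; lra. Qed.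

Lemma real_root mu b L : - mu = exp L -> 0 < L -> - L / 2 <= b ->
  exists z, charfun mu b z = 0 /\ Cmod z <= 1.
Proof.
  intros Hmu HL Hb.
  set (F := fun r => L + ln r + b * (1 + r)).
  assert (Hgood : forall r, 0 < r <= 1 -> F r = 0 -> exists z, charfun mu b z = 0 /\ Cmod z <= 1).
  { intros r Hr HF. exists (-r, 0). split.
    - apply (root_intro mu b (-r) 0 r); try lra.
      + rewrite Rmult_0_r, cos_0. ring.
      + rewrite Rmult_0_r, sin_0. ring.
      + rewrite Hmu. replace (b * (1 - - r)) with (b * (1 + r)) by ring.
        rewrite <- (exp_ln r) at 1 by lra. rewrite <- !exp_plus.
        unfold F in HF. replace (L + ln r + b * (1 + r)) with 0 by lra. apply exp_0.
    - rewrite (Cmod_polar (-r) 0 r 1 0); try lra. }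
  destruct (Req_dec (F 1) 0) as [H1|H1].
  { apply (Hgood 1); [lra|auto]. }
  set (r0 := exp (-(L + 2 * Rabs b + 1))).
  assert (Hr0 : 0 < r0 < 1).
  { split; [apply exp_pos|]. rewrite <- exp_0. apply exp_increasing.
    assert (0 <= Rabs b) by apply Rabs_pos. lra. }
  destruct (IVT_interv F r0 1) as [r [Hr HF]].
  - intros a Ha. apply cont_pt. unfold F. auto_derive. lra.
  - lra.
  - unfold F, r0. rewrite ln_exp. fold r0.
    assert (b <= Rabs b) by apply Rle_abs. assert (-b <= Rabs b) by (rewrite <- Rabs_Ropp; apply Rle_abs).
    nra.
  - unfold F in *. rewrite ln_1 in *. lra.
  - apply (Hgood r); [lra|auto].
Qed.
Lemma reduce w : 0 < w -> 0 < sin w -> exists t, 0 < t < PI /\ t <= w /\ sin t = sin w /\ cos t = cos w.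
Proof.
  intros Hw Hs. assert (HP := PI_gt3).
  set (q := w / (2*PI)).
  assert (Hq : 0 < q) by (unfold q; apply Rdiv_lt_0_compat; lra).
  destruct (archimed q) as [A1 A2].
  assert (Hup : (0 < up q)%Z) by (apply lt_IZR; lra).
  set (k := Z.to_nat (up q - 1)).
  assert (Hk : INR k = IZR (up q) - 1).
  { unfold k. rewrite INR_IZR_INZ, Z2Nat.id by lia. rewrite minus_IZR. reflexivity. }
  set (t := w - 2 * INR k * PI).
  assert (Ew : w = t + 2 * INR k * PI) by (unfold t; ring).
  assert (Hs' : sin t = sin w) by (rewrite Ew, sin_period; reflexivity).
  assert (Hc' : cos t = cos w) by (rewrite Ew, cos_period; reflexivity).
  assert (Hqw : w = q * (2*PI)) by (unfold q; field; lra).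
  assert (Ht0 : 0 <= t) by (unfold t; rewrite Hk, Hqw; nra).
  assert (Ht1 : t < 2*PI) by (unfold t; rewrite Hk, Hqw; nra).
  assert (HkP : 0 <= INR k) by apply pos_INR.
  exists t. repeat split; try assumption.
  - destruct (Req_dec t 0) as [e|]; [|lra]. rewrite e, sin_0 in Hs'. lra.
  - destruct (Rlt_or_le t PI) as [|h]; [auto|].
    assert (sin t <= 0) by (apply sin_le_0; lra). lra.
  - unfold t. nra.
Qed.

Lemma no_root mu b L tau : - mu = exp L -> 0 < L < 2 -> 0 < tau < PI ->
  tau * (1 + cos tau) = L * sin tau -> - (tau / sin tau) < b -> b < - L / 2 ->
  forall z, charfun mu b z = 0 -> Cmod z > 1.
Proof.
  intros Hmu HL Htau Hf Hb1 Hb2 [x y] Hz.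
  assert (HP := PI_gt3).
  assert (Hst : 0 < sin tau) by (apply sin_pos_0PI; lra).
  assert (Hmu0 : mu < 0) by (assert (0 < exp L) by apply exp_pos; lra).
  destruct (root_polar mu b x y Hmu0 Hz) as [r [Hr [Hx [Hy HM]]]].
  assert (Hcs : cos (b*y) * cos (b*y) + sin (b*y) * sin (b*y) = 1)
    by (rewrite <- (sin2_cos2 (b*y)); unfold Rsqr; ring).
  rewrite (Cmod_polar x y r (cos (b*y)) (sin (b*y))) by assumption.
  apply Rnot_le_gt. intros Hr1.
  set (beta := - b).
  assert (Hbeta : L / 2 < beta) by (unfold beta; lra).
  assert (HlnM : L + ln r + b * (1 - x) = 0).
  { rewrite Hmu in HM. rewrite <- (exp_ln r) in HM at 1 by lra.
    rewrite <- !exp_plus in HM. apply (f_equal ln) in HM. rewrite ln_exp, ln_1 in HM. lra. }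
  destruct (Req_dec y 0) as [Hy0|Hy0].
  -
    rewrite Hy0, Rmult_0_r, cos_0 in Hx.
    rewrite Hx in HlnM.
    assert (Hlr := ln_le_m1 r Hr).
    destruct (Rle_or_lt beta 1) as [Hb|Hb].
    + unfold beta in *. nra.
    + assert (Hlbr := ln_le_m1 (beta * r) ltac:(apply Rmult_lt_0_compat; lra)).
      rewrite ln_mult in Hlbr by lra.
      assert (0 < ln beta) by (rewrite <- ln_1; apply ln_increasing; lra).
      unfold beta in *. nra.
  - set (w := beta * Rabs y).
    assert (Hw : 0 < w) by (unfold w; apply Rmult_lt_0_compat; [lra| apply Rabs_pos_lt; auto]).
    assert (Hyw : Rabs y = r * sin w /\ cos (b*y) = cos w).
    { unfold w, beta. destruct (Rle_or_lt 0 y) as [hy|hy].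
      - rewrite Rabs_right by lra.
        replace (b*y) with (- (- b * y)) in Hy, Hx |- * by ring.
        rewrite sin_neg in Hy. rewrite cos_neg. split; [lra|auto].
      - rewrite Rabs_left by lra.
        replace (b*y) with (- b * - y) in Hy, Hx |- * by ring.
        split; [lra|auto]. }
    destruct Hyw as [Hyw Hcw].
    assert (Hwr : w = beta * r * sin w) by (transitivity (beta * Rabs y); [reflexivity|]; rewrite Hyw; ring).
    assert (Hsw : 0 < sin w).
    { destruct (Rlt_or_le 0 (sin w)) as [|h]; [auto|].
      assert (beta * r * sin w <= 0).
      { assert (0 < beta * r) by (apply Rmult_lt_0_compat; lra). nra. }
      lra. }
    rewrite Hcw in Hx.
    destruct (reduce w Hw Hsw) as [t [Ht [Htw [Hst' Hct]]]].
    set (rho := beta * r).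
    assert (Hrho : 0 < rho) by (unfold rho; apply Rmult_lt_0_compat; lra).
    assert (Hrb : rho <= beta) by (unfold rho; nra).
    assert (Hsint : 0 < sin t) by (apply sin_pos_0PI; lra).
    assert (Hts : t / sin t <= rho).
    { apply (Rmult_le_reg_r (sin t)); [lra|]. unfold Rdiv. rewrite Rmult_assoc, Rinv_l by lra.
      rewrite Hst'. fold rho in Hwr. lra. }
    assert (Hlt : t < tau).
    { destruct (Rlt_or_le t tau) as [|h]; [auto|].
      assert (tau / sin tau <= t / sin t) by (apply M1; lra). unfold beta in *. lra. }
    assert (Hf2 : f2 tau < f2 t) by (apply M2; lra).
    assert (Hf2tau : f2 tau = L) by (unfold f2; rewrite Hf; field; lra).
    assert (Hcos1 : 0 < 1 + cos t).
    { destruct (COS_bound t). destruct (Req_dec (cos t) (-1)) as [e|]; [|lra].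
      assert (Hs := sin2_cos2 t); unfold Rsqr in Hs. rewrite e in Hs. nra. }
    assert (Hf2t : f2 t <= rho * (1 + cos t)).
    { unfold f2. replace (t * (1 + cos t) / sin t) with ((t / sin t) * (1 + cos t)) by (field; lra).
      apply Rmult_le_compat_r; lra. }
    (* L >= rho (1 + cos t) *)
    assert (Hlnrho : ln rho = ln beta + ln r) by (unfold rho; apply ln_mult; lra).
    assert (Hlnle : ln rho <= ln beta).
    { destruct (Req_dec rho beta) as [e|]; [rewrite e; lra|]. left; apply ln_increasing; lra. }
    assert (HL2 : L = beta + rho * cos t - ln rho + ln beta).
    { rewrite Hct, Hlnrho. unfold rho. rewrite Hx in HlnM. unfold beta in *. nra. }
    nra.
Qed.

Lemma cplx_root mu b L tau : - mu = exp L -> 0 < L < 2 -> 0 < tau < PI ->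
  tau * (1 + cos tau) = L * sin tau -> b <= - (tau / sin tau) ->
  exists z, charfun mu b z = 0 /\ Cmod z <= 1.
Proof.
  intros Hmu HL Htau Hf Hb.
  assert (HP := PI_gt3).
  assert (Hst : 0 < sin tau) by (apply sin_pos_0PI; lra).
  assert (Hst2 : sin tau < tau) by (apply sin_lt_x; lra).
  assert (Hb1 : 1 < tau / sin tau).
  { apply (Rmult_lt_reg_r (sin tau)); [lra|]. unfold Rdiv. rewrite Rmult_assoc, Rinv_l by lra. lra. }
  set (beta := - b).
  assert (Hbeta : tau / sin tau <= beta) by (unfold beta; lra).
  assert (Hlb : 0 < ln beta) by (rewrite <- ln_1; apply ln_increasing; lra).
  set (C := ln beta + beta - L).
  set (G := fun t => ln (t / sin t) - t * cos t / sin t - C).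
  set (d := 2 - L). set (e := d / 4).
  assert (He : 0 < e < 1/2) by (unfold e, d; lra).
  set (dl := exp (-(beta + ln beta + 1))).
  assert (Hdl : 0 < dl < 1).
  { split; [apply exp_pos|]. rewrite <- exp_0. apply exp_increasing. lra. }
  set (T := PI - dl).
  destruct (IVT_interv G e T) as [t [Ht HG]].
  - intros a Ha. apply cont_pt. unfold G.
    assert (0 < sin a) by (apply sin_pos_0PI; unfold T in Ha; lra).
    auto_derive. repeat split; try lra. apply Rdiv_lt_0_compat; unfold T in Ha; lra.
  - unfold T; lra.
  - unfold G.
    assert (Hs1 : sin e < e) by (apply sin_lt_x; lra).
    assert (Hs2 : e - e^3/6 <= sin e) by (apply sin_lb3; lra).
    assert (Hc : 1 - e^2/2 <= cos e) by (apply cos_lb2; lra).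
    assert (Hs0 : 0 < sin e) by (apply sin_pos_0PI; lra).
    assert (Hln := ln_le_m1 (e / sin e) ltac:(apply Rdiv_lt_0_compat; lra)).
    assert (HC : 1 - L <= C) by (unfold C; lra).
    assert (Hee : e * e < d / 8) by (unfold e, d in *; nra).
    assert (Hkey : e - sin e - e * cos e - C * sin e < 0).
    { assert (- C * sin e <= (1 - d) * sin e) by (apply Rmult_le_compat_r; unfold d; lra).
      assert (e * (1 - cos e) <= e * (e^2/2)) by (apply Rmult_le_compat_l; lra).
      assert (d * (e - e^3/6) <= d * sin e) by (apply Rmult_le_compat_l; unfold d; lra).
      assert (e * (e^2/2 - d + d * e^2/6) < 0).
      { assert (e^2/2 - d + d * e^2/6 < 0) by (unfold d in *; nra). nra. }
      nra. }
    assert (Heq : e / sin e - 1 - e * cos e / sin e - C = (e - sin e - e * cos e - C * sin e) / sin e)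
      by (field; lra).
    assert ((e - sin e - e * cos e - C * sin e) / sin e < 0) by (apply Rdiv_neg_pos; lra).
    lra.
  - unfold G, T.
    rewrite sin_PI_x, Rtrigo_facts.cos_pi_minus.
    assert (Hs0 : 0 < sin dl) by (apply sin_pos_0PI; lra).
    assert (Hs1 : sin dl < dl) by (apply sin_lt_x; lra).
    assert (Hc0 : 0 <= cos dl) by (apply cos_ge_0; lra).
    assert (H1 : 1 / dl < (PI - dl) / sin dl).
    { apply (Rlt_le_trans _ (1 / sin dl)).
      - unfold Rdiv. rewrite !Rmult_1_l. apply Rinv_lt_contravar; [nra|lra].
      - unfold Rdiv. apply Rmult_le_compat_r; [left; apply Rinv_0_lt_compat; lra| lra]. }
    assert (H2 : ln (1 / dl) < ln ((PI - dl) / sin dl))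
      by (apply ln_increasing; [apply Rdiv_lt_0_compat; lra| lra]).
    assert (H3 : ln (1 / dl) = beta + ln beta + 1).
    { unfold dl. unfold Rdiv. rewrite Rmult_1_l, <- exp_Ropp, ln_exp. ring. }
    assert (H4 : 0 <= (PI - dl) * - cos dl / sin dl * -1).
    { replace ((PI - dl) * - cos dl / sin dl * -1) with ((PI - dl) * cos dl / sin dl) by (field; lra).
      apply Rmult_le_pos; [apply Rmult_le_pos; lra| left; apply Rinv_0_lt_compat; lra]. }
    unfold C. lra.
  - assert (Ht0 : 0 < t < PI) by (unfold T in Ht; lra).
    assert (Hsn : 0 < sin t) by (apply sin_pos_0PI; lra).
    set (rho := t / sin t).
    assert (Hrho : 0 < rho) by (unfold rho; apply Rdiv_lt_0_compat; lra).
    assert (HGt : ln rho - t * cos t / sin t - ln beta - beta + L = 0) by (unfold G, C in HG; fold rho in HG; lra).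
    assert (Hrb : rho <= beta).
    { destruct (Rle_or_lt rho beta) as [|h]; [auto|exfalso].
      assert (Hlt : tau < t).
      { destruct (Rlt_or_le tau t) as [|h']; [auto|].
        assert (Hm : t / sin t <= tau / sin tau) by (apply M1; lra). change (t / sin t) with rho in Hm. lra. }
      assert (Hf2 : f2 t < f2 tau) by (apply M2; lra).
      assert (Hf2tau : f2 tau = L) by (unfold f2; rewrite Hf; field; lra).
      assert (Hf2t : f2 t = rho + t * cos t / sin t) by (unfold f2, rho; field; lra).
      assert (ln beta < ln rho) by (apply ln_increasing; lra).
      lra. }
    set (r := rho / beta).
    assert (Hr : 0 < r) by (unfold r; apply Rdiv_lt_0_compat; lra).
    assert (Hr1 : r <= 1).
    { unfold r. apply (Rmult_le_reg_r beta); [lra|]. unfold Rdiv. rewrite Rmult_assoc, Rinv_l by lra. lra. }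
    assert (Hby : b * (r * sin t) = - t).
    { unfold r, rho, beta. field. lra. }
    assert (Hcs : cos t * cos t + sin t * sin t = 1)
      by (rewrite <- (sin2_cos2 t); unfold Rsqr; ring).
    exists (- r * cos t, r * sin t). split.
    + apply (root_intro mu b _ _ r Hr).
      * rewrite Hby, cos_neg. reflexivity.
      * rewrite Hby, sin_neg. ring.
      * rewrite Hmu. rewrite <- (exp_ln r) at 1 by lra. rewrite <- !exp_plus.
        replace (L + ln r + b * (1 - - r * cos t)) with 0. { apply exp_0. }
        assert (Hlnr : ln r = ln rho - ln beta).
        { unfold r, Rdiv. rewrite ln_mult, ln_Rinv; try ring; try lra; apply Rinv_0_lt_compat; lra. }
        rewrite Hlnr.
        replace (b * (1 - - r * cos t)) with (- beta - t * cos t / sin t) by (unfold r, rho, beta; field; split; lra).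
        lra.
    + rewrite (Cmod_polar (- r * cos t) (r * sin t) r (cos t) (- sin t)); try lra; ring_simplify; try lra.
Qed.

Lemma charac mu L tau : - mu = exp L -> 0 < L < 2 -> 0 < tau < PI ->
  tau * (1 + cos tau) = L * sin tau ->
  forall b, Iset mu b <-> - (tau / sin tau) < b < - L / 2.
Proof.
  intros Hmu HL Htau Hf b. split.
  - intros HI. split.
    + destruct (Rlt_or_le (- (tau / sin tau)) b) as [|h]; [auto|exfalso].
      destruct (cplx_root mu b L tau Hmu HL Htau Hf h) as [z [Hz Hm]].
      specialize (HI z Hz). lra.
    + destruct (Rlt_or_le b (- L / 2)) as [|h]; [auto|exfalso].
      destruct (real_root mu b L Hmu ltac:(lra) h) as [z [Hz Hm]].
      specialize (HI z Hz). lra.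
  - intros [H1 H2]. intros z Hz. apply (no_root mu b L tau); auto.
Qed.

Lemma L_of_mu mu : - exp 2 < mu < -1 ->
  - mu = exp (ln (- mu)) /\ 0 < ln (- mu) < 2.
Proof.
  intros Hm. split.
  - rewrite exp_ln; lra.
  - split.
    + rewrite <- ln_1. apply ln_increasing; lra.
    + rewrite <- (ln_exp 2). apply ln_increasing; lra.
Qed.

Lemma tau_big tau : 0 < tau < PI -> 1 < tau / sin tau.
Proof.
  intros Ht. assert (Hst : 0 < sin tau) by (apply sin_pos_0PI; lra).
  assert (Hst2 : sin tau < tau) by (apply sin_lt_x; lra).
  apply (Rmult_lt_reg_r (sin tau)); [lra|]. unfold Rdiv. rewrite Rmult_assoc, Rinv_l by lra. lra.
Qed.

Theorem corollary5p4 :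
  (forall mu : R, - exp 2 < mu < -1 ->
     nonempty_open_interval (Iset mu) /\ (forall b, Iset mu b -> b < 0)) /\
  (forall mu1 mu2 : R, - exp 2 < mu1 -> mu1 < mu2 -> mu2 < -1 ->
     forall b, Iset mu1 b -> Iset mu2 b).
Proof.
  split.
  - intros mu Hm. destruct (L_of_mu mu Hm) as [HE HL].
    set (L := ln (- mu)) in *.
    destruct (tau_exists L HL) as [tau [Ht Hf]].
    assert (Hc := charac mu L tau HE HL Ht Hf).
    assert (Hb := tau_big tau Ht).
    split.
    + exists (Finite (- (tau / sin tau))), (Finite (- L / 2)). simpl. split; [lra|].
      intros x. rewrite Hc. simpl. tauto.
    + intros b Hb'. apply Hc in Hb'. lra.
  - intros mu1 mu2 H1 H12 H2 b Hb.
    destruct (L_of_mu mu1 ltac:(lra)) as [HE1 HL1].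
    destruct (L_of_mu mu2 ltac:(lra)) as [HE2 HL2].
    assert (HLL : ln (- mu2) < ln (- mu1)) by (apply ln_increasing; lra).
    set (L1 := ln (- mu1)) in *. set (L2 := ln (- mu2)) in *.
    destruct (tau_exists L1 HL1) as [t1 [Ht1 Hf1]].
    destruct (tau_exists L2 HL2) as [t2 [Ht2 Hf2]].
    apply (charac mu1 L1 t1 HE1 HL1 Ht1 Hf1) in Hb.
    apply (charac mu2 L2 t2 HE2 HL2 Ht2 Hf2).
    assert (Hs1 : 0 < sin t1) by (apply sin_pos_0PI; lra).
    assert (Hs2 : 0 < sin t2) by (apply sin_pos_0PI; lra).
    assert (Ht12 : t1 <= t2).
    { destruct (Rle_or_lt t1 t2) as [|h]; [auto|exfalso].
      assert (f2 t1 < f2 t2) by (apply M2; lra).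
      assert (f2 t1 = L1) by (unfold f2; rewrite Hf1; field; lra).
      assert (f2 t2 = L2) by (unfold f2; rewrite Hf2; field; lra).
      lra. }
    assert (t1 / sin t1 <= t2 / sin t2) by (apply M1; lra).
    lra.
Qed.
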